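(* Let $a,b,d$ be positive integers with $d$ not a perfect square, $\alpha=a+b^2\sqrt d$, $N_\alpha=a^2-b^4d$, and $t,u$ positive integers with $\varepsilon=(t+u\sqrt d)/2$ a unit of the ring of integers of $\mathbb{Q}(\sqrt d)$; define $x_k+y_k\sqrt d=\alpha\varepsilon^{2k}$ for $k\in\mathbb{Z}$. Suppose $k\ne0$, $\gcd(a,b)=1$, $N_\alpha<0$, and $x_k,y_k$ are both integers. Let $t'=\operatorname{core}(N_\alpha)$, $u_1=2x_k$, $u_2=\pm2\sqrt{N_\alpha/\operatorname{core}(N_\alpha)}$, and let $g$ be defined from $(t',u_1,u_2)$ as below. Then $g^2/\gcd(a^2,db^4)=2^m$ for some integer $m\ge0$.
   Context: $\operatorname{core}(n)$ is the unique squarefree integer with $n/\operatorname{core}(n)$ a perfect square. Given $t',u_1,u_2$: $g_1=\gcd(u_1,u_2)$, $g_2=\gcd(u_1/g_1,t')$ (positive gcds); $g_3=1$ if $t'\equiv1\pmod4$ and $(u_1-u_2)/g_1$ is even, $g_3=2$ if $t'\equiv3\pmod4$ and $(u_1-u_2)/g_1$ is even, $g_3=4$ otherwise; $g=g_1\sqrt{g_2/g_3}$. *)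

(* Defs.v *)
From mathcomp Require Import all_boot all_order all_algebra all_field.
Set Implicit Arguments. Unset Strict Implicit. Unset Printing Implicit Defensive.
Import Order.TTheory GRing.Theory Num.Theory.
Local Open Scope ring_scope.

Definition sqfree_int (c : int) : Prop :=
  c != 0 /\ forall p : nat, prime p -> ~~ (p ^ 2 %| `|c|%N)%N.

Definition is_core (n c : int) : Prop :=
  sqfree_int c /\ exists s : int, n = c * s ^+ 2.

Definition g1_of (u1 u2 : int) : int := gcdz u1 u2.
Definition g2_of (t' u1 u2 : int) : int := gcdz (u1 %/ g1_of u1 u2)%Z t'.
Definition g3_of (t' u1 u2 : int) : int :=
  if (2 %| ((u1 - u2) %/ g1_of u1 u2)%Z)%Z then
    (if (t' %% 4)%Z == 1 then 1 else if (t' %% 4)%Z == 3 then 2 else 4)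
  else 4.
Definition g_of (t' u1 u2 : int) : algC :=
  (g1_of u1 u2)%:~R * sqrtC ((g2_of t' u1 u2)%:~R / (g3_of t' u1 u2)%:~R).

(* Main.v *)
Require Import Defs.
From mathcomp Require Import all_boot all_order all_algebra all_field.
From mathcomp Require Import ring zify.
Import Order.TTheory GRing.Theory Num.Theory.
Local Open Scope ring_scope.

Lemma two_sq_sub (x : int) : exists c, x ^+ 2 - x = 2 * c.
Proof.
have H := divz_eq x 2.
have r0 : 0 <= (x %% 2)%Z by apply: modz_ge0.
have r1 : (x %% 2)%Z < 2 by apply: ltz_pmod.
set q := (x %/ 2)%Z in H; set r := (x %% 2)%Z in H r0 r1.
have : r = 0 \/ r = 1 by lia.
case=> Hr; rewrite Hr in H; rewrite H.
  by exists (2 * q ^+ 2 - q); ring.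
by exists (2 * q ^+ 2 + q); ring.
Qed.

Lemma par_rep (d P Q : int) : P ^+ 2 - d * Q ^+ 2 = 4 -> exists R, P = d * Q + 2 * R.
Proof.
move=> H.
have [A HA] := two_sq_sub P; have [B HB] := two_sq_sub Q.
exists (2 - A + d * B).
have : P - d * Q = (P ^+ 2 - d * Q ^+ 2) - (P ^+ 2 - P) + d * (Q ^+ 2 - Q) by ring.
rewrite H HA HB => E.
have -> : P = (P - d * Q) + d * Q by ring.
rewrite E; ring.
Qed.

Ltac dv := solve [assumption | apply: dvdzz | apply: dvdz_mulr; dv | apply: dvdz_mull; dv].

Lemma halfI (x y : int) : 2 * x = 2 * y -> x = y.
Proof. by apply: mulfI. Qed.

Lemma sq_dvd (D x : int) : (D ^+ 2 %| x ^+ 2)%Z -> (D %| x)%Z.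
Proof. by rewrite dvdz_pexp2r. Qed.

Lemma nt (A B d X Y P Q t' s : int) :
  coprimez A B ->
  P ^+ 2 - d * Q ^+ 2 = 4 ->
  2 * X = A * P + B * d * Q ->
  2 * Y = A * Q + B * P ->
  A ^+ 2 - B ^+ 2 * d = t' * s ^+ 2 ->
  forall D : int, (D %| X ^+ 2)%Z -> (D %| t' * s ^+ 2)%Z -> (D %| 16 * gcdz (A ^+ 2) d)%Z.
Proof.
move=> cop HP HX HY HN D DX DN.
have HN2 : X ^+ 2 - d * Y ^+ 2 = t' * s ^+ 2.
  apply: (mulfI (_ : (4 : int) != 0)) => //.
  have -> : 4 * (X ^+ 2 - d * Y ^+ 2) = (2 * X) ^+ 2 - d * (2 * Y) ^+ 2 by ring.
  rewrite HX HY -HN -HP; ring.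
have H2A : 2 * A = X * P - d * Y * Q.
  apply: halfI; rewrite mulrA.
  have -> : 2 * (X * P - d * Y * Q) = (2 * X) * P - d * (2 * Y) * Q by ring.
  rewrite HX HY.
  have -> : 2 * 2 * A = A * 4 by ring.
  rewrite -HP; ring.
have H2B : 2 * B = P * Y - X * Q.
  apply: halfI; rewrite mulrA.
  have -> : 2 * (P * Y - X * Q) = P * (2 * Y) - (2 * X) * Q by ring.
  rewrite HX HY.
  have -> : 2 * 2 * B = B * 4 by ring.
  rewrite -HP; ring.
have DdY : (D %| d * Y ^+ 2)%Z.
  have -> : d * Y ^+ 2 = X ^+ 2 - t' * s ^+ 2 by rewrite -HN2; ring.
  by rewrite rpredB.
have DdXY : (D %| d * X * Y)%Z.
  apply: sq_dvd.
  have -> : (d * X * Y) ^+ 2 = X ^+ 2 * (d * (d * Y ^+ 2)) by ring.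
  by rewrite expr2 dvdz_mul // dvdz_mull.
have DA : (D %| 4 * A ^+ 2)%Z.
  have -> : 4 * A ^+ 2 = X ^+ 2 * P ^+ 2 - 2 * P * Q * (d * X * Y) + Q ^+ 2 * (d * (d * Y ^+ 2)).
    have -> : 4 * A ^+ 2 = (2 * A) ^+ 2 by ring.
    by rewrite H2A; ring.
  by rewrite rpredD ?rpredB //; dv.
have DB : (D %| 4 * d * B ^+ 2)%Z.
  have -> : 4 * d * B ^+ 2 = P ^+ 2 * (d * Y ^+ 2) - 2 * P * Q * (d * X * Y) + d * Q ^+ 2 * X ^+ 2.
    have -> : 4 * d * B ^+ 2 = d * (2 * B) ^+ 2 by ring.
    by rewrite H2B; ring.
  by rewrite rpredD ?rpredB //; dv.
have gB4 : (gcdz D (B ^+ 2) %| 4)%Z.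
  have copBA : coprimez (B ^+ 2) (A ^+ 2) by rewrite coprimezXl // coprimezXr // coprimez_sym.
  have : (gcdz D (B ^+ 2) %| gcdz (B ^+ 2) (4 * A ^+ 2))%Z.
    by rewrite dvdz_gcd dvdz_gcdr (dvdz_trans (dvdz_gcdl _ _) DA).
  by rewrite Gauss_gcdzl // => H; apply: dvdz_trans H _; apply: dvdz_gcdr.
have D16d : (D %| 16 * d)%Z.
  have : (D %| gcdz (4 * d * B ^+ 2) (4 * d * D))%Z by rewrite dvdz_gcd DB /=; dv.
  rewrite -mulz_gcdr gcdzC => /dvdz_trans; apply.
  have -> : 16 * d = 4 * d * 4 by ring.
  rewrite dvdzE abszM absz_nat -abszM -dvdzE.
  by apply: dvdz_mul => //; rewrite dvdzE.
have D16A : (D %| 16 * A ^+ 2)%Z.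
  have -> : 16 * A ^+ 2 = 4 * (4 * A ^+ 2) by ring.
  dv.
have : (D %| gcdz (16 * d) (16 * A ^+ 2))%Z by rewrite dvdz_gcd D16d.
by rewrite -mulz_gcdr gcdzC.
Qed.

Lemma GX (A B X P Q : int) (d : nat) : P ^+ 2 - d%:Z * Q ^+ 2 = 4 ->
  2 * X = A * P + B * d%:Z * Q -> (gcdz (A ^+ 2) d%:Z %| X ^+ 2)%Z.
Proof.
move=> HP HX.
set G := gcdz (A ^+ 2) d%:Z.
have GA : (G %| A ^+ 2)%Z by apply: dvdz_gcdl.
have Gd : (G %| d%:Z)%Z by apply: dvdz_gcdr.
have [R HR] := par_rep _ _ _ HP.
set Z := X - A * R.
have HZ : 2 * Z = d%:Z * Q * (A + B).
  rewrite /Z mulrBr HX HR; ring.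
have HZ2 : 4 * Z ^+ 2 = d%:Z * (d%:Z * Q ^+ 2 * (A + B) ^+ 2).
  have -> : 4 * Z ^+ 2 = (2 * Z) ^+ 2 by ring.
  rewrite HZ; ring.
have GZ : (G %| Z ^+ 2)%Z.
  case/boolP: (odd d) => od.
    have cG : coprimez G 4.
      rewrite coprimezE (_ : `|4%:Z|%N = (2 ^ 2)%N) // coprime_pexpr //.
      rewrite coprimen2; apply: dvdn_odd od.
      by move: Gd; rewrite dvdzE.
    by rewrite -(Gauss_dvdzr _ cG) HZ2; dv.
  have H4 : (4 %| d%:Z * Q ^+ 2 * (d%:Z - 1))%Z.
    have -> : d%:Z * Q ^+ 2 * (d%:Z - 1) = 4 * (1 - d%:Z * Q * R - R ^+ 2).
      have -> : d%:Z * Q ^+ 2 * (d%:Z - 1) = ((d%:Z * Q + 2 * R) ^+ 2 - d%:Z * Q ^+ 2) - 4 * d%:Z * Q * R - 4 * R ^+ 2 by ring.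
      rewrite -HR HP; ring.
    dv.
  have c4 : coprimez 4 (d%:Z - 1).
    rewrite coprimezE (_ : `|4%:Z|%N = (2 ^ 2)%N) // coprime_pexpl // coprime2n.
    clear -od; case: d od => [|n] // od.
    have -> : n.+1%:Z - 1 = n%:Z by lia.
    by rewrite absz_nat; move: od => /=; rewrite negbK.
  move: H4; rewrite Gauss_dvdzl // => /dvdzP [W HW].
  have : 4 * Z ^+ 2 = 4 * (d%:Z * W * (A + B) ^+ 2) by rewrite HZ2 HW; ring.
  move/(mulfI (_ : (4:int) != 0)) => -> //; dv.
have -> : X ^+ 2 = Z ^+ 2 + 2 * R * (A * Z) + A ^+ 2 * R ^+ 2 by rewrite /Z; ring.
have GAZ : (G %| A * Z)%Z.
  rewrite -(dvdz_pexp2r _ _ (_ : 0 < 2)%N) // (_ : (A * Z) ^+ 2 = A ^+ 2 * Z ^+ 2); last by ring.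
  by rewrite expr2 dvdz_mul.
by rewrite !rpredD //; dv.
Qed.

Lemma sqfree_gcd_sq (x n : nat) : (0 < n)%N ->
  (forall p : nat, prime p -> ~~ (p ^ 2 %| n)%N) ->
  gcdn (x ^ 2) n = gcdn x n.
Proof.
move=> n0 sq.
set g := gcdn (x ^ 2) n; set c := gcdn x n.
have gn : (g %| n)%N by apply: dvdn_gcdr.
have gx : (g %| x ^ 2)%N by apply: dvdn_gcdl.
have g0 : (0 < g)%N by rewrite gcdn_gt0 n0 orbT.
apply/eqP; rewrite eqn_dvd; apply/andP; split; last first.
  by rewrite dvdn_gcd dvdn_gcdr andbT (dvdn_trans (dvdn_gcdl _ _)) // dvdn_exp.
set e := gcdn g x.
have e0 : (0 < e)%N by rewrite gcdn_gt0 g0.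
have [g' Hg] : exists g', g = (g' * e)%N by exists (g %/ e)%N; rewrite divnK // dvdn_gcdl.
have [x' Hx] : exists x', x = (x' * e)%N by exists (x %/ e)%N; rewrite divnK // dvdn_gcdr.
have cop : coprime g' x'.
  rewrite /coprime -(eqn_pmul2r e0) mul1n muln_gcdl -Hg -Hx //.
have g'c : (g' %| e)%N.
  have : (g' * e %| x' ^ 2 * e * e)%N.
    have -> : (x'^2*e*e = x^2)%N by rewrite Hx expnMn -mulnA mulnn.
    by rewrite -Hg.
  by rewrite dvdn_pmul2r // Gauss_dvdr // coprimeXr.
have g'1 : g' = 1%N.
  case: (ltngtP g' 1) => // [|H].
    rewrite ltnS leqn0 => /eqP H; move: g0; by rewrite Hg H.
  have pp := pdiv_prime H.
  have : (pdiv g' ^ 2 %| n)%N.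
    apply: dvdn_trans gn; rewrite Hg expnS expn1 dvdn_mul ?pdiv_dvd //.
    exact: dvdn_trans (pdiv_dvd _) g'c.
  by move/negP: (sq _ pp).
rewrite dvdn_gcd gn andbT -/g Hg g'1 mul1n /e dvdn_gcdr //.
Qed.

Lemma GD (G X s t' : int) : s != 0 -> t' != 0 ->
  (forall p : nat, prime p -> ~~ (p ^ 2 %| `|t'|)%N) ->
  (G %| X ^+ 2)%Z -> (G %| t' * s ^+ 2)%Z ->
  let h := gcdz X s in let D := h ^+ 2 * gcdz (X %/ h)%Z t' in
  [/\ (G %| D)%Z, (D %| X ^+ 2)%Z & (D %| t' * s ^+ 2)%Z].
Proof.
move=> s0 t0 sq GX GN h D.
have h0 : h != 0 by rewrite gcdz_eq0 negb_and s0 orbT.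
have hp : 0 <= h by [].
have [X' HX] : exists X', X = X' * h by exists (X %/ h)%Z; rewrite divzK // dvdz_gcdl.
have [s' Hs] : exists s', s = s' * h by exists (s %/ h)%Z; rewrite divzK // dvdz_gcdr.
have HX' : (X %/ h)%Z = X' by rewrite HX mulzK.
have cop : coprimez X' s'.
  have E : gcdz X' s' * h = 1 * h.
    rewrite mul1r; have {1}-> : h = `|h|%:Z by rewrite gez0_abs.
    by rewrite mulz_gcdl -HX -Hs.
  by move: E => /(mulIf h0) E; rewrite /coprimez E.
rewrite /D HX'; split.
- have : (G %| gcdz (h ^+ 2 * X' ^+ 2) (h ^+ 2 * (t' * s' ^+ 2)))%Z.
    rewrite dvdz_gcd; apply/andP; split.
      by rewrite (_ : h ^+ 2 * X' ^+ 2 = X ^+ 2) // HX; ring.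
    by rewrite (_ : h ^+ 2 * (t' * s' ^+ 2) = t' * s ^+ 2) // Hs; ring.
  rewrite -mulz_gcdr Gauss_gcdzl; last by rewrite coprimezXl // coprimezXr.
  have -> : gcdz (X' ^+ 2) t' = gcdz X' t'.
    rewrite /gcdz abszX sqfree_gcd_sq //.
    by rewrite absz_gt0.
  by rewrite abszE ger0_norm // exprn_ge0.
- rewrite HX exprMn mulrC; apply: dvdz_mul => //.
  by apply: dvdz_exp => //; apply: dvdz_gcdl.
- rewrite Hs exprMn mulrA mulrC; apply: dvdz_mul => //.
  by apply: dvdz_mulr; apply: dvdz_gcdr.
Qed.

Lemma sqrt_irr (d : nat) : ~ (exists r : nat, d = (r ^ 2)%N) -> sqrtC (d%:R : algC) \notin Crat.
Proof.
move=> nsq; apply/negP => Hr.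
have Ha : sqrtC (d%:R : algC) \in Aint.
  apply: (@root_monic_Aint ('X^2 - (d%:R)%:P)).
  - by rewrite rootE !hornerE sqrtCK subrr.
  - exact: monicXnsubC.
  - by rewrite polyOverXnsubC rpred_nat.
have Hi := Cint_rat_Aint Hr Ha.
have : sqrtC (d%:R : algC) \is a Num.nat by rewrite natrEint Hi sqrtC_ge0 ler0n.
case/natrP => n Hn; apply: nsq; exists n.
by apply/eqP; rewrite -(eqr_nat algC) natrX -Hn sqrtCK.
Qed.

Lemma rep_uniq (d : nat) (x y x' y' : int) : sqrtC (d%:R : algC) \notin Crat ->
  x%:~R + y%:~R * sqrtC (d%:R) = x'%:~R + y'%:~R * sqrtC (d%:R) :> algC -> x = x' /\ y = y'.
Proof.
move=> nr E.
have yy : y = y'.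
  apply/eqP; apply/negPn/negP => ny; move/negP: nr; apply.
  have ny' : (y'%:~R - y%:~R : algC) != 0 by rewrite subr_eq0 eq_sym eqr_int.
  have -> : sqrtC (d%:R : algC) = (x%:~R - x'%:~R) / (y'%:~R - y%:~R).
    apply: (mulIf ny'); rewrite divfK //.
    rewrite (_ : x%:~R = x'%:~R + y'%:~R * sqrtC d%:R - y%:~R * sqrtC d%:R); first by ring.
    by rewrite -E; ring.
  by rewrite rpred_div // rpredB // rpred_int.
by split=> //; move: E; rewrite yy => /addIr /eqP; rewrite eqr_int => /eqP.
Qed.

Lemma quad_norm (d : nat) (r s : rat) : sqrtC (d%:R : algC) \notin Crat -> s != 0 ->
  ratr r + ratr s * sqrtC d%:R \in Aint -> ratr (r ^+ 2 - d%:R * s ^+ 2) \in (Num.int : {pred algC}).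
Proof.
move=> nr s0; set w := sqrtC (d%:R : algC); set x := ratr r + ratr s * w => Ax.
set c := d%:R * s ^+ 2.
set q : {poly rat} := ('X - r%:P) ^+ 2 + (- c)%:P.
have [p [Dp mp] dv] := minCpolyP x.
have rq : root (map_poly ratr q) x.
  rewrite rootE /q rmorphD rmorphXn rmorphB /= map_polyX !map_polyC /= !hornerE.
  rewrite /c rmorphN rmorphM rmorphXn /= rmorph_nat /x.
  have : w ^+ 2 = d%:R by rewrite sqrtCK.
  move=> Hw; apply/eqP.
  rewrite (_ : ratr r + ratr s * w - ratr r = ratr s * w); last by ring.
  by rewrite exprMn Hw; ring.
have pq : (p %| q)%R by rewrite -dv.
have szq : size q = 3%N.
  by rewrite /q size_addl ?size_exp_XsubC //; apply: leq_ltn_trans (size_polyC_leq1 _) _.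
have mq : q \is monic.
  rewrite monicE /q lead_coefDl; first by rewrite -monicE rpredX // monicXsubC.
  by rewrite ?size_exp_XsubC; apply: leq_ltn_trans (size_polyC_leq1 _) _.
have q0 : q != 0 by apply: monic_neq0.
have szp : (1 < size p)%N by rewrite -(size_map_poly (ratr : {rmorphism rat -> algC})) -Dp size_minCpoly.
have szp3 : (size p <= 3)%N by rewrite -szq dvdp_leq.
have szp3' : size p = 3%N.
  case: (ltngtP (size p) 2) => [H|H|H]; [lia | lia | ].
  exfalso; move/negP: nr; apply.
  have rp : root (map_poly ratr p) x by rewrite -Dp root_minCpoly.
  move: rp; rewrite rootE horner_coef size_map_poly H !big_ord_recl big_ord0 /=.
  rewrite !coef_map /= expr0 mulr1 expr1.
  have -> : p`_1 = 1.
    by move: mp; rewrite monicE lead_coefE H => /eqP.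
  rewrite rmorph1 mul1r addr0 => /eqP Hx.
  rewrite -/w.
  have -> : w = (x - ratr r) / ratr s.
    by rewrite /x (addrC (ratr r)) addrK (mulrC (ratr s)) mulfK // fmorph_eq0.
  rewrite rpred_div // ?rpredB //.
  - by rewrite (_ : x = - ratr p`_0) ?rpredN ?Crat_rat //; apply/eqP; rewrite -addr_eq0 addrC Hx.
  - exact: Crat_rat.
  - exact: Crat_rat.
have Epq : p = q.
  by apply/eqP; rewrite -eqp_monic // -dvdp_size_eqp // szp3' szq.
move: Ax; rewrite /Aint unfold_in Dp Epq => /polyOverP /(_ 0%N).
rewrite coef_map /= -horner_coef0 /q !hornerE /c.
by rewrite sqrrN.
Qed.

Ltac ratsimp := rewrite ?(rmorphB, rmorphD, rmorphM, rmorphN, rmorphXn, fmorphV, fmorph_div, rmorph_nat, rmorph_int, rmorph1) /=.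

Lemma unit_norm (d t u : nat) : sqrtC (d%:R : algC) \notin Crat -> (0 < u)%N ->
  ((t%:R + u%:R * sqrtC d%:R) / 2 : algC) \in Aint ->
  ((t%:R + u%:R * sqrtC d%:R) / 2 : algC)^-1 \in Aint ->
  exists n : int, (n = 1 \/ n = -1) /\ (t%:Z) ^+ 2 - d%:Z * (u%:Z) ^+ 2 = 4 * n.
Proof.
move=> nr u0; set w := sqrtC (d%:R : algC); set e := (_ / 2) => Ae Ai.
have Hw : w ^+ 2 = d%:R by rewrite sqrtCK.
have u0' : (u%:R : algC) != 0 by rewrite pnatr_eq0 -lt0n.
have := @quad_norm d (t%:R / 2) (u%:R / 2) nr.
rewrite mulf_neq0 ?invr_eq0 ?pnatr_eq0 -?lt0n // => /(_ isT).
have -> : ratr (t%:R / 2) + ratr (u%:R / 2) * w = e.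
  by ratsimp; rewrite /e; field.
move=> /(_ Ae); ratsimp; case/intrP => n Hn.
have n0 : n != 0.
  apply/negP => /eqP n0; move: Hn; rewrite n0 mulr0z => Htu.
  move/negP: nr; apply; rewrite -/w.
  have -> : w = t%:R / u%:R.
    rewrite /w (_ : d%:R = (t%:R / u%:R) ^+ 2) ?sqrCK //; last first.
      rewrite expr_div_n; apply: (mulIf (expf_neq0 2 u0')); rewrite divfK ?expf_neq0 //.
      have H4 : (t%:R ^+ 2 - d%:R * u%:R ^+ 2) / 4 = 0 :> algC by rewrite -Htu; field.
      apply/eqP; rewrite eq_sym -subr_eq0; move/eqP: H4.
      by rewrite mulf_eq0 invr_eq0 pnatr_eq0 orbF.
    by rewrite divr_ge0 ?ler0n.
  by rewrite rpred_div ?rpred_nat.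
have n0' : (n%:~R : algC) != 0 by rewrite intr_eq0.
have Hn' : (t%:R ^+ 2 - d%:R * u%:R ^+ 2) / 4 = n%:~R :> algC by rewrite -Hn; field.
set z := (t%:R - u%:R * w) / (2 * n%:~R).
have Ez : e^-1 = z.
  apply: mulr1_eq; rewrite /e /z.
  rewrite (_ : (t%:R + u%:R * w) / 2 * ((t%:R - u%:R * w) / (2 * n%:~R)) = (t%:R ^+ 2 - d%:R * u%:R ^+ 2) / 4 / n%:~R).
    by rewrite Hn' divff.
  by rewrite -Hw; field.
have nq : (n%:~R : rat) != 0 by rewrite intr_eq0.
have := @quad_norm d (t%:R / (2 * n%:~R)) (- (u%:R / (2 * n%:~R))) nr.
rewrite oppr_eq0 mulf_neq0 ?invr_eq0 ?mulf_neq0 ?pnatr_eq0 -?lt0n // => /(_ isT).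
have -> : ratr (t%:R / (2 * n%:~R)) + ratr (- (u%:R / (2 * n%:~R))) * w = z.
  by ratsimp; rewrite /z; field.
rewrite -Ez => /(_ Ai); ratsimp.
have -> : (t%:R / (2 * n%:~R)) ^+ 2 - d%:R * (- (u%:R / (2 * n%:~R))) ^+ 2 = (n%:~R : algC)^-1.
  rewrite (_ : _ - _ = (t%:R ^+ 2 - d%:R * u%:R ^+ 2) / 4 / (n%:~R) ^+ 2); last by field.
  by rewrite Hn'; field.
case/intrP => m Hm.
have nm : n * m = 1.
  apply/eqP; rewrite -(eqr_int algC) intrM -Hm divff //.
exists n; split; last first.
  apply/eqP; rewrite -(eqr_int algC); ratsimp.
  have Ht : forall k : nat, ((k%:Z)%:~R : algC) = k%:R by [].
  rewrite !Ht -Hn'; apply/eqP; field.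
have : (n %| 1)%Z by apply/dvdzP; exists m; rewrite mulrC nm.
rewrite dvdz1 => /eqP H; lia.
have : (n %| 1)%Z by apply/dvdzP; exists m; rewrite mulrC nm.
rewrite dvdz1 => /eqP H; lia.
Qed.

Definition Rep (d : nat) (z : algC) := exists P Q : int,
  P ^+ 2 - d%:Z * Q ^+ 2 = 4 /\ z = (P%:~R + Q%:~R * sqrtC d%:R) / 2.

Lemma rep_mul d z1 z2 : Rep d z1 -> Rep d z2 -> Rep d (z1 * z2).
Proof.
move=> [P1 [Q1 [H1 ->]]] [P2 [Q2 [H2 ->]]].
have [R1 HR1] := par_rep _ _ _ H1.
have [R2 HR2] := par_rep _ _ _ H2.
have [C HC] := two_sq_sub (d%:Z + 1).
set P := C * Q1 * Q2 + d%:Z * Q1 * R2 + d%:Z * R1 * Q2 + 2 * R1 * R2.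
set Q := d%:Z * Q1 * Q2 + R1 * Q2 + Q1 * R2.
have E1 : 2 * P = P1 * P2 + d%:Z * Q1 * Q2.
  have -> : 2 * P = (2 * C) * Q1 * Q2 + 2 * (d%:Z * Q1 * R2 + d%:Z * R1 * Q2 + 2 * R1 * R2) by rewrite /P; ring.
  by rewrite -HC HR1 HR2; ring.
have E2 : 2 * Q = P1 * Q2 + Q1 * P2.
  by rewrite /Q HR1 HR2; ring.
clearbody P Q.
exists P, Q; split.
  apply: (mulfI (_ : (4 : int) != 0)) => //.
  have -> : 4 * (P ^+ 2 - d%:Z * Q ^+ 2) = (2 * P) ^+ 2 - d%:Z * (2 * Q) ^+ 2 by ring.
  rewrite E1 E2.
  have -> : (P1 * P2 + d%:Z * Q1 * Q2) ^+ 2 - d%:Z * (P1 * Q2 + Q1 * P2) ^+ 2 = (P1 ^+ 2 - d%:Z * Q1 ^+ 2) * (P2 ^+ 2 - d%:Z * Q2 ^+ 2) by ring.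
  by rewrite H1 H2.
have Hw : sqrtC (d%:R : algC) ^+ 2 = d%:R by rewrite sqrtCK.
have E1' : 2 * (P%:~R : algC) = P1%:~R * P2%:~R + d%:R * Q1%:~R * Q2%:~R.
  by have := congr1 (fun x : int => (x%:~R : algC)) E1; rewrite /= !rmorphD !rmorphM /=.
have E2' : 2 * (Q%:~R : algC) = P1%:~R * Q2%:~R + Q1%:~R * P2%:~R.
  by have := congr1 (fun x : int => (x%:~R : algC)) E2; rewrite /= !rmorphD !rmorphM /=.
apply: (mulfI (_ : (4 : algC) != 0)); first by rewrite pnatr_eq0.
rewrite (_ : 4 * ((P%:~R + Q%:~R * sqrtC d%:R) / 2) = 2 * P%:~R + 2 * Q%:~R * sqrtC d%:R :> algC); last by field.
by rewrite E1' E2'; move: Hw; set w := sqrtC _ => Hw; rewrite -Hw; field.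
Qed.

Lemma rep_inv d z : Rep d z -> Rep d z^-1.
Proof.
move=> [P [Q [H ->]]]; exists P, (- Q); split; first by rewrite sqrrN.
apply: mulr1_eq.
have Hw : sqrtC (d%:R : algC) ^+ 2 = d%:R by rewrite sqrtCK.
have H' : (P%:~R : algC) ^+ 2 - d%:R * Q%:~R ^+ 2 = 4.
  have := congr1 (fun x : int => (x%:~R : algC)) H; rewrite /= !rmorphB ?rmorphM ?rmorphXn /= => HH; rewrite !expr2; exact: HH.
rewrite rmorphN /=.
rewrite (_ : _ * _ = ((P%:~R : algC) ^+ 2 - sqrtC d%:R ^+ 2 * Q%:~R ^+ 2) / 4); last by field.
by rewrite Hw H' divff // pnatr_eq0.
Qed.

Lemma rep_exp d z (k : int) : Rep d z -> Rep d (z ^ k).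
Proof.
move=> Hz.
have Hn : forall n : nat, Rep d (z ^+ n).
  elim=> [|n IH].
    exists 2, 0; split; first by ring.
    by rewrite expr0 mul0r addr0 divff // pnatr_eq0.
  by rewrite exprS; apply: rep_mul.
case: k => n; first exact: Hn.
exact: rep_inv (Hn _).
Qed.

Lemma rep_eps2 (d t u : nat) (n : int) : (n = 1 \/ n = -1) ->
  (t%:Z) ^+ 2 - d%:Z * (u%:Z) ^+ 2 = 4 * n ->
  Rep d (((t%:R + u%:R * sqrtC d%:R) / 2) ^+ 2).
Proof.
move=> Hn H.
have n2 : n ^+ 2 = 1 by case: Hn => ->.
exists ((t%:Z) ^+ 2 - 2 * n), (t%:Z * u%:Z); split.
  rewrite (_ : _ - _ = (t%:Z) ^+ 2 * ((t%:Z) ^+ 2 - d%:Z * (u%:Z) ^+ 2) - 4 * n * (t%:Z) ^+ 2 + 4 * n ^+ 2); last by ring.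
  by rewrite H n2; ring.
have Hw : sqrtC (d%:R : algC) ^+ 2 = d%:R by rewrite sqrtCK.
have H' : (t%:R : algC) ^+ 2 = d%:R * u%:R ^+ 2 + 4 * n%:~R.
  have := congr1 (fun x : int => (x%:~R : algC)) H; rewrite /= ?rmorphB ?rmorphM ?rmorphXn /= => HH.
  apply/eqP; rewrite -subr_eq0 (_ : _ - _ = (t%:R ^+ 2 - d%:R * u%:R ^+ 2) - 4 * n%:~R :> algC); last by ring.
  by rewrite !expr2 HH subrr.
move: Hw; set w := sqrtC _ => Hw.
rewrite (_ : ((t%:R + u%:R * w) / 2) ^+ 2 = (t%:R ^+ 2 + 2 * t%:R * u%:R * w + u%:R ^+ 2 * w ^+ 2) / 4); last by field.
rewrite Hw H' ?rmorphB ?rmorphM ?rmorphXn /=.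
rewrite (_ : ((t%:Z)%:~R : algC) = t%:R) // (_ : ((u%:Z)%:~R : algC) = u%:R) //.
by rewrite -expr2 H'; field.
Qed.


Lemma final_alg (g1 g2 : int) (j i G : nat) : (0 < G)%N -> (j <= i.+2)%N ->
  g1 ^+ 2 * g2 = (2 ^ i.+2 * G)%N%:Z ->
  ((g1%:~R : algC) * sqrtC (g2%:~R / ((2 ^+ j : int)%:~R))) ^+ 2 / G%:R = 2%:R ^+ (i.+2 - j).
Proof.
move=> G0 ji H.
have H' : (g1%:~R : algC) ^+ 2 * g2%:~R = 2 ^+ (i.+2 - j) * 2 ^+ j * G%:R.
  have := congr1 (fun x : int => (x%:~R : algC)) H.
  rewrite /= rmorphM rmorphXn /= => ->.
  by rewrite -exprD subnK // -pmulrn natrM natrX.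
have G0' : (G%:R : algC) != 0 by rewrite pnatr_eq0 -lt0n.
have j0 : (2 : algC) ^+ j != 0 by rewrite expf_neq0 // pnatr_eq0.
have -> : ((2 ^+ j : int)%:~R : algC) = 2 ^+ j.
  by elim: (j) => // j' IH; rewrite !exprS intrM IH.
rewrite exprMn sqrtCK.
rewrite mulrA H'; field.
by rewrite j0 G0'.
Qed.


Theorem lemma3p11 (a b d t u : nat) (k : int) (t' s u2 X Y : int) :
  (0 < a)%N -> (0 < b)%N -> (0 < d)%N ->
  ~ (exists r : nat, d = (r ^ 2)%N) ->
  (0 < t)%N -> (0 < u)%N ->
  (* eps = (t + u sqrt d)/2 is a unit of the ring of integers of Q(sqrt d) *)
  ((t%:R + u%:R * sqrtC d%:R) / 2 : algC) \in Aint ->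
  ((t%:R + u%:R * sqrtC d%:R) / 2 : algC)^-1 \in Aint ->
  k != 0 ->
  coprime a b ->
  ((a ^ 2)%:Z - (b ^ 4 * d)%:Z < 0) ->
  (* x_k = X, y_k = Y are integers: X + Y sqrt d = alpha * eps^(2k) *)
  (X%:~R + Y%:~R * sqrtC d%:R : algC) =
    (a%:R + (b ^ 2)%:R * sqrtC d%:R) * ((t%:R + u%:R * sqrtC d%:R) / 2) ^ (2 * k) ->
  is_core ((a ^ 2)%:Z - (b ^ 4 * d)%:Z) t' ->
  (* s = sqrt(N_alpha / core(N_alpha)) *)
  0 <= s -> (a ^ 2)%:Z - (b ^ 4 * d)%:Z = t' * s ^+ 2 ->
  (u2 = 2 * s \/ u2 = - (2 * s)) ->
  exists m : nat,
    (g_of t' (2 * X) u2) ^+ 2 / (gcdn (a ^ 2) (d * b ^ 4))%:R = 2%:R ^+ m.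
Proof.
move=> a0 b0 d0 nsq t0 u0 Ae Ai k0 cab Nneg HXY [[t0' sq] _] s0 HN Hu2.
have nr := sqrt_irr _ nsq.
set w := sqrtC (d%:R : algC) in HXY Ae Ai nr.
have [n [Hn Htu]] := unit_norm _ _ _ nr u0 Ae Ai.
have R2 := rep_eps2 _ _ _ _ Hn Htu.
have Rk := rep_exp _ _ k R2.
have Ek : ((t%:R + u%:R * w) / 2) ^ (2 * k) = (((t%:R + u%:R * w) / 2) ^+ 2) ^ k.
  by rewrite -exprz_exp.
rewrite Ek in HXY.
case: Rk => P [Q [HPQ EPQ]].
rewrite -/w in EPQ; rewrite EPQ in HXY.
have Hw : w ^+ 2 = d%:R by rewrite sqrtCK.
have E : ((2 * X)%:~R + (2 * Y)%:~R * w : algC) =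
   (a%:Z * P + (b ^ 2)%:Z * d%:Z * Q)%:~R + (a%:Z * Q + (b ^ 2)%:Z * P)%:~R * w.
  rewrite !rmorphD !rmorphM /= -!pmulrn.
  rewrite (_ : 2%:~R * X%:~R + 2%:~R * Y%:~R * w = 2 * (X%:~R + Y%:~R * w) :> algC); last by ring.
  by rewrite HXY -Hw; field.
have [HX HY] := rep_uniq _ _ _ _ _ nr E.
clear E HXY EPQ Ek R2 Ae Ai.
set A := a%:Z in HX HY; set B := (b ^ 2)%:Z in HX HY.
have HN' : A ^+ 2 - B ^+ 2 * d%:Z = t' * s ^+ 2 by rewrite -HN /A /B; lia.
have cAB : coprimez A B by rewrite coprimezE !absz_nat coprime_pexpr.
have s0' : s != 0.
  apply/negP => /eqP s00; move: Nneg; rewrite HN s00; by rewrite expr0n mulr0.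
set G' := gcdz (A ^+ 2) d%:Z.
have GXX := GX A B X P Q d HPQ HX.
have GN : (G' %| t' * s ^+ 2)%Z.
  by rewrite -HN' rpredB // ?dvdz_gcdl // dvdz_mull // dvdz_gcdr.
have [GDd DX DN] := GD G' X s t' s0' t0' sq GXX GN.
move: GDd DX DN; set h := gcdz X s; set D := h ^+ 2 * _ => GDd DX DN.
have D16 := nt A B d X Y P Q t' s cAB HPQ HX HY HN' D DX DN.
have EG : G' = (gcdn (a ^ 2) d)%:Z by rewrite /G' /gcdz abszX absz_nat.
have EG2 : gcdn (a ^ 2) (d * b ^ 4) = gcdn (a ^ 2) d.
  by rewrite Gauss_gcdl // coprime_pexpl // coprime_pexpr.
have Gpos : (0 < gcdn (a ^ 2) d)%N by rewrite gcdn_gt0 expn_gt0 a0.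
have G'p : 0 < G' by rewrite EG ltz_nat.
have G'0 : G' != 0 by rewrite gt_eqF.
have [c Hc] := dvdzP GDd.
have c16 : (c %| 16)%Z by move: D16; rewrite Hc -/G' dvdz_mul2r.
have D0 : 0 <= D by rewrite /D mulr_ge0 // sqr_ge0.
have c0 : 0 <= c by move: D0; rewrite Hc pmulr_lge0.
have [i i4 Ei] : exists2 i, (i <= 4)%N & `|c|%N = (2 ^ i)%N.
  by apply/dvdn_pfactor => //; move: c16; rewrite dvdzE.
have Ec : c = (2 ^ i)%N%:Z by rewrite -Ei gez0_abs.
have Eg1 : g1_of (2 * X) u2 = 2 * h.
  rewrite /g1_of; case: Hu2 => ->; rewrite ?gcdzN -mulz_gcdr //.
have Eg2 : g2_of t' (2 * X) u2 = gcdz (X %/ h)%Z t'.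
  by rewrite /g2_of Eg1 divzMl //; last exact: dvdz_gcdl.
have [j j2 Eg3] : exists2 j, (j <= 2)%N & g3_of t' (2 * X) u2 = 2 ^+ j.
  rewrite /g3_of; case: ifP => _; last by exists 2%N.
  case: ifP => _; first by exists 0%N.
  case: ifP => _; first by exists 1%N.
  by exists 2%N.
exists (i.+2 - j)%N.
rewrite /g_of Eg2 Eg3 EG2 Eg1.
apply: (final_alg _ _ j i _ Gpos).
  by apply: leq_trans j2 _.
rewrite exprMn -mulrA -/D Hc Ec EG.
by rewrite !expnS !PoszM; ring.
Qed.
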